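(* Let $A$ be a $\boldsymbol{\mathit{ba}\ell}$-algebra and $\alpha:A\to D(\mathbb R[B])$ as in the context. Then $\alpha$ is compact: whenever $S,T\subseteq A$ and $0<\varepsilon\in\mathbb R$ satisfy $\bigwedge\alpha[S]+\varepsilon\le\bigvee\alpha[T]$ in $D(\mathbb R[B])$, there are finite $S_0\subseteq S$ and $T_0\subseteq T$ with $\bigwedge S_0\le\bigvee T_0$ in $A$.
   Context: A $\boldsymbol{\mathit{ba}\ell}$-algebra is a commutative unital lattice-ordered algebra $A$ over $\mathbb R$ that is bounded (for every $a\in A$ there is an integer $n\ge1$ with $a\le n\cdot1$) and archimedean (if $na\le b$ for all $n\ge1$ then $a\le0$); reals $r$ are identified with $r\cdot1$. For $a\in A$: $a^+=a\vee0$, $a^-=(-a)\vee0$. An $\ell$-ideal is a ring ideal $I$ with $|a|\le|b|$, $b\in I\Rightarrow a\in I$; it is archimedean if $A/I$ is archimedean. ${\sf Arch}(A)$ is the set of archimedean $\ell$-ideals ordered by inclusion, a bounded distributive lattice (a frame) with meet $\cap$ and join $I\vee J$ the least archimedean $\ell$-ideal containing $I\cup J$. $B$ is the free boolean extension of the bounded distributive lattice ${\sf Arch}(A)$; ${\sf Arch}(A)\subseteq B$ and $\lnot$ is complement in $B$. For a boolean algebra $B$, $\mathbb R[B]$ is the quotient of $\mathbb R[x_e\mid e\in B]$ by the ideal generated by $x_{e\wedge f}-x_ex_f$, $x_{e\vee f}-(x_e+x_f-x_ex_f)$, $x_{\lnot e}-(1-x_e)$, $x_0$; it is a $\boldsymbol{\mathit{ba}\ell}$-algebra.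 $D(\mathbb R[B])$ is its Dedekind completion (Dedekind complete $\boldsymbol{\mathit{ba}\ell}$-algebra containing $\mathbb R[B]$, every element a join of elements of $\mathbb R[B]$). $\alpha(a)=-s+\bigvee\{rx_{\lnot I}\mid r\in\mathbb R,\ I\in{\sf Arch}(A),\ (a+s-r)^-\in I\}$ for any $s\in\mathbb R$ with $a+s\ge0$ (well defined, independent of $s$). *)

(* Defs.v *)
From HB Require Import structures.
From mathcomp Require Import all_boot all_order all_algebra.
From mathcomp Require Import reals.
Set Implicit Arguments. Unset Strict Implicit. Unset Printing Implicit Defensive.
Import Order.TTheory GRing.Theory Num.Theory.
Local Open Scope ring_scope.

Section BaL.
Variables (R : realType) (A : comAlgType R).

Record baL := BaL {
  bale : A -> A -> Prop;
  bajoin : A -> A -> A;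
  bameet : A -> A -> A;
  bale_refl : forall a, bale a a;
  bale_anti : forall a b, bale a b -> bale b a -> a = b;
  bale_trans : forall a b c, bale a b -> bale b c -> bale a c;
  bajoin_l : forall a b, bale a (bajoin a b);
  bajoin_r : forall a b, bale b (bajoin a b);
  bajoin_lub : forall a b c, bale a c -> bale b c -> bale (bajoin a b) c;
  bameet_l : forall a b, bale (bameet a b) a;
  bameet_r : forall a b, bale (bameet a b) b;
  bameet_glb : forall a b c, bale c a -> bale c b -> bale c (bameet a b);
  bale_add : forall a b c, bale a b -> bale (a + c) (b + c);
  bale_mul : forall a b, bale 0 a -> bale 0 b -> bale 0 (a * b);
  bale_scale : forall (r : R) a, 0 <= r -> bale 0 a -> bale 0 (r *: a);
  ba_bounded : forall a, exists n : nat, (1 <= n)%N /\ bale a (n%:R);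
  ba_arch : forall a b, (forall n : nat, (1 <= n)%N -> bale (a *+ n) b) -> bale a 0
}.

Variable L : baL.
Local Notation le := (bale L).

Definition baAbs (a : A) : A := bajoin L a (- a).
Definition baNeg (a : A) : A := bajoin L (- a) 0.

Definition isSup (X : A -> Prop) (c : A) : Prop :=
  (forall y, X y -> le y c) /\ (forall b, (forall y, X y -> le y b) -> le c b).
Definition isInf (X : A -> Prop) (c : A) : Prop :=
  (forall y, X y -> le c y) /\ (forall b, (forall y, X y -> le b y) -> le b c).

Definition dedekindComplete : Prop :=
  forall X : A -> Prop, (exists a, X a) -> (exists b, forall y, X y -> le y b) ->
    exists c, isSup X c.

Definition isRingIdeal (I : A -> Prop) : Prop :=
  I 0 /\ (forall a b, I a -> I b -> I (a + b)) /\ (forall a c, I a -> I (c * a)).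

Definition isLIdeal (I : A -> Prop) : Prop :=
  isRingIdeal I /\ (forall a b, le (baAbs a) (baAbs b) -> I b -> I a).

(* order of the quotient A/I:  [a] <= [b]  iff  a <= b + i for some i in I *)
Definition quotLe (I : A -> Prop) (a b : A) : Prop := exists i, I i /\ le a (b + i).

Definition isArchIdeal (I : A -> Prop) : Prop :=
  isLIdeal I /\
  forall a b, (forall n : nat, (1 <= n)%N -> quotLe I (a *+ n) b) -> quotLe I a 0.

Definition archBot : A -> Prop := fun a => a = 0.
Definition archTop : A -> Prop := fun _ => True.
Definition archMeet (I J : A -> Prop) : A -> Prop := fun a => I a /\ J a.
Definition archJoin (I J : A -> Prop) : A -> Prop :=
  fun a => forall K, isArchIdeal K -> (forall b, I b -> K b) -> (forall b, J b -> K b) -> K a.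

Definition archLatHom (d : Order.disp_t) (C : tbDistrLatticeType d)
    (f : (A -> Prop) -> C) : Prop :=
  f archBot = Order.bottom /\ f archTop = Order.top /\
  (forall I J, isArchIdeal I -> isArchIdeal J ->
     f (archMeet I J) = Order.meet (f I) (f J) /\
     f (archJoin I J) = Order.join (f I) (f J)).

End BaL.

Definition boolHom (d1 d2 : Order.disp_t) (B : ctbDistrLatticeType d1)
   (C : ctbDistrLatticeType d2) (g : B -> C) : Prop :=
  g Order.bottom = Order.bottom /\ g Order.top = Order.top /\
  (forall a b, g (Order.meet a b) = Order.meet (g a) (g b)) /\
  (forall a b, g (Order.join a b) = Order.join (g a) (g b)).

Definition isFreeBoolExt (R : realType) (A : comAlgType R) (L : baL A)
    (d : Order.disp_t) (B : ctbDistrLatticeType d) (e : (A -> Prop) -> B) : Prop :=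
  archLatHom L e /\
  forall (d' : Order.disp_t) (C : ctbDistrLatticeType d') (f : (A -> Prop) -> C),
    archLatHom L f ->
    (exists g : B -> C, boolHom g /\ forall I, isArchIdeal L I -> g (e I) = f I) /\
    (forall g1 g2 : B -> C, boolHom g1 -> boolHom g2 ->
       (forall I, isArchIdeal L I -> g1 (e I) = f I) ->
       (forall I, isArchIdeal L I -> g2 (e I) = f I) ->
       forall b, g1 b = g2 b).

Definition algHom (R : realType) (P Q : comAlgType R) (h : P -> Q) : Prop :=
  (forall p q, h (p + q) = h p + h q) /\ (forall p q, h (p * q) = h p * h q) /\
  h 1 = 1 /\ (forall (r : R) p, h (r *: p) = r *: h p).

(* the defining relations of R[B] *)
Definition rbRel (R : realType) (d : Order.disp_t) (B : ctbDistrLatticeType d)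
    (Q : comAlgType R) (y : B -> Q) : Prop :=
  (forall e f, y (Order.meet e f) = y e * y f) /\
  (forall e f, y (Order.join e f) = y e + y f - y e * y f) /\
  (forall e, y (Order.compl e) = 1 - y e) /\
  y Order.bottom = 0.

(* x : B -> P exhibits P as R[B] = R[x_e | e in B] / (relations),
   i.e. P is the initial commutative R-algebra with elements x_e satisfying
   the relations *)
Definition isRB (R : realType) (d : Order.disp_t) (B : ctbDistrLatticeType d)
    (P : comAlgType R) (x : B -> P) : Prop :=
  rbRel x /\
  forall (Q : comAlgType R) (y : B -> Q), rbRel y ->
    (exists h : P -> Q, algHom h /\ forall e, h (x e) = y e) /\
    (forall h1 h2 : P -> Q, algHom h1 -> algHom h2 ->
       (forall e, h1 (x e) = y e) -> (forall e, h2 (x e) = y e) ->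
       forall p, h1 p = h2 p).

Definition isDedekindCompletion (R : realType) (P D : comAlgType R)
    (LP : baL P) (LD : baL D) (j : P -> D) : Prop :=
  dedekindComplete LD /\ algHom j /\ injective j /\
  (forall p q, j (bajoin LP p q) = bajoin LD (j p) (j q)) /\
  (forall p q, j (bameet LP p q) = bameet LD (j p) (j q)) /\
  (forall z : D, exists X : D -> Prop,
     (forall y, X y -> exists p, y = j p) /\ isSup LD X z).

(* The map alpha : A -> D(R[B]).  alphaSet a s is the set
   { r x_{not I} | r in R, I in Arch(A), (a + s - r)^- in I } (inside D),
   and  isAlpha a z  means  z = alpha(a), i.e.
   z = -s + \/ alphaSet a s  for some s with a + s >= 0. *)
Section Alpha.
Variables (R : realType) (A : comAlgType R) (LA : baL A)
  (d : Order.disp_t) (B : ctbDistrLatticeType d) (e : (A -> Prop) -> B)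
  (P : comAlgType R) (x : B -> P) (D : comAlgType R) (LD : baL D) (j : P -> D).

Definition alphaSet (a : A) (s : R) : D -> Prop :=
  fun z => exists (r : R) (I : A -> Prop),
    isArchIdeal LA I /\ I (baNeg LA (a + s%:A - r%:A)) /\
    z = r *: j (x (Order.compl (e I))).

Definition isAlpha (a : A) (z : D) : Prop :=
  exists s : R, bale LA 0 (a + s%:A) /\ isSup LD (alphaSet a s) (z + s%:A).

Definition alphaImage (S : A -> Prop) : D -> Prop :=
  fun z => exists a, S a /\ isAlpha a z.
End Alpha.

(* Main.v *)
Require Import Defs.
From HB Require Import structures.
From mathcomp Require Import all_boot all_order all_algebra.
From mathcomp Require Import reals boolp classical_sets.
From mathcomp Require Import ring lra.
Import Order.TTheory GRing.Theory Num.Theory.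
Local Open Scope ring_scope.
Set Implicit Arguments. Unset Strict Implicit. Unset Printing Implicit Defensive.

Section Gen.
Variables (R : realType) (A : comAlgType R) (L : baL A).
Local Notation "x <=: y" := (bale L x y) (at level 70).
Local Notation jn := (bajoin L).
Local Notation mt := (bameet L).
Local Notation ab := (baAbs L).
Local Notation nn := (baNeg L).
Definition pp (a : A) := jn a 0.

Lemma gR a : a <=: a. Proof. exact: bale_refl. Qed.
Lemma gT a b c : a <=: b -> b <=: c -> a <=: c. Proof. exact: bale_trans. Qed.
Lemma gA a b : a <=: b -> b <=: a -> a = b. Proof. exact: bale_anti. Qed.
Lemma gDr a b c : a <=: b -> a + c <=: b + c. Proof. exact: bale_add. Qed.
Lemma gDl a b c : a <=: b -> c + a <=: c + b.
Proof. by move=> h; rewrite ![c + _]addrC; apply: gDr. Qed.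
Lemma gD a b c d : a <=: b -> c <=: d -> a + c <=: b + d.
Proof. by move=> h1 h2; apply: (gT (gDr c h1)); apply: gDl. Qed.
Lemma gsub a b : (0 <=: b - a) <-> (a <=: b).
Proof.
split=> h; first by have := gDr a h; rewrite add0r subrK.
by have := gDr (- a) h; rewrite subrr.
Qed.
Lemma gN a b : a <=: b -> - b <=: - a.
Proof. by move=> h; apply/gsub; rewrite opprK addrC; apply/gsub. Qed.
Lemma gNl a b : - a <=: b -> - b <=: a.
Proof. by move=> h; have := gN h; rewrite opprK. Qed.
Lemma gNr a b : a <=: - b -> b <=: - a.
Proof. by move=> h; have := gN h; rewrite opprK. Qed.

Lemma jl a b : a <=: jn a b. Proof. exact: bajoin_l. Qed.
Lemma jr a b : b <=: jn a b. Proof. exact: bajoin_r. Qed.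
Lemma jlub a b c : a <=: c -> b <=: c -> jn a b <=: c. Proof. exact: bajoin_lub. Qed.
Lemma ml a b : mt a b <=: a. Proof. exact: bameet_l. Qed.
Lemma mr a b : mt a b <=: b. Proof. exact: bameet_r. Qed.
Lemma mglb a b c : c <=: a -> c <=: b -> c <=: mt a b. Proof. exact: bameet_glb. Qed.

Ltac lat := solve [apply: jl | apply: jr | apply: ml | apply: mr | apply: gR].

Lemma jC a b : jn a b = jn b a.
Proof. by apply: gA; apply: jlub; lat. Qed.
Lemma mC a b : mt a b = mt b a.
Proof. by apply: gA; apply: mglb; lat. Qed.
Lemma jmono a b c d : a <=: b -> c <=: d -> jn a c <=: jn b d.
Proof. by move=> h1 h2; apply: jlub; [apply: gT h1 _; apply: jl|apply: gT h2 _; apply: jr]. Qed.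
Lemma mmono a b c d : a <=: b -> c <=: d -> mt a c <=: mt b d.
Proof. by move=> h1 h2; apply: mglb; [apply: gT _ h1; apply: ml|apply: gT _ h2; apply: mr]. Qed.
Lemma jE a b : a <=: b -> jn a b = b.
Proof. by move=> h; apply: gA; [apply: jlub => //; apply: gR|apply: jr]. Qed.
Lemma mE a b : a <=: b -> mt a b = a.
Proof. by move=> h; apply: gA; [apply: ml|apply: mglb => //; apply: gR]. Qed.
Lemma mxx a : mt a a = a. Proof. by apply: mE; apply: gR. Qed.

Lemma jD a b c : jn a b + c = jn (a + c) (b + c).
Proof.
apply: gA; last by apply: jlub; apply: gDr; lat.
have h : jn a b <=: jn (a + c) (b + c) - c.
  by apply: jlub; [rewrite -{1}(addrK c a)|rewrite -{1}(addrK c b)]; apply: gDr; lat.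
by have := gDr c h; rewrite subrK.
Qed.
Lemma mD a b c : mt a b + c = mt (a + c) (b + c).
Proof.
apply: gA; first by apply: mglb; apply: gDr; lat.
have h : mt (a + c) (b + c) - c <=: mt a b.
  by apply: mglb; [rewrite -{2}(addrK c a)|rewrite -{2}(addrK c b)]; apply: gDr; lat.
by have := gDr c h; rewrite subrK.
Qed.
Lemma oppJ a b : - jn a b = mt (- a) (- b).
Proof.
apply: gA.
  by apply: mglb; apply: gN; lat.
apply: gNr; apply: jlub; apply: gNr; lat.
Qed.
Lemma oppM a b : - mt a b = jn (- a) (- b).
Proof. by rewrite -[a]opprK -[b]opprK -oppJ !opprK. Qed.
Lemma jmD a b : jn a b + mt a b = a + b.
Proof.
have -> : mt a b = a + b - jn a b.
  by rewrite oppJ addrC mD addKr [a + b]addrC addKr mC.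
by rewrite addrC subrK.
Qed.

Lemma gZ (r : R) a b : 0 <= r -> a <=: b -> r *: a <=: r *: b.
Proof. by move=> hr /gsub h; apply/gsub; rewrite -scalerBr; apply: bale_scale. Qed.
Lemma mZ (r : R) a b : 0 < r -> r *: mt a b = mt (r *: a) (r *: b).
Proof.
move=> hr; apply: gA.
  by apply: mglb; (apply: gZ; [exact: ltW hr | lat]).
have h : r^-1 *: mt (r *: a) (r *: b) <=: mt a b.
  apply: mglb.
    by rewrite -[a in _ <=: a](scale1r) -(mulVf (lt0r_neq0 hr)) -scalerA; apply: gZ; [by rewrite invr_ge0 ltW | lat].
  by rewrite -[b in _ <=: b](scale1r) -(mulVf (lt0r_neq0 hr)) -scalerA; apply: gZ; [by rewrite invr_ge0 ltW | lat].
have := gZ (ltW hr) h; rewrite scalerA mulfV ?lt0r_neq0 // scale1r //.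
Qed.
Lemma jZ (r : R) a b : 0 < r -> r *: jn a b = jn (r *: a) (r *: b).
Proof.
move=> hr; apply: (@oppr_inj _); rewrite -scalerN oppJ mZ // oppJ !scalerN //.
Qed.

Lemma g01 : 0 <=: 1.
Proof.
have [n [hn h]] := ba_bounded L 0.
have hn' : (0 : R) < n%:R by rewrite ltr0n.
have hi : (0 : R) <= n%:R^-1 by rewrite invr_ge0 ltW.
have := gZ hi h; rewrite scaler0 -scaler_nat scalerA mulVf ?lt0r_neq0 // scale1r //.
Qed.
Lemma cst_ge0 (r : R) : 0 <= r -> 0 <=: r%:A.
Proof. by move=> hr; apply: bale_scale => //; apply: g01. Qed.
Lemma cst_le (r s : R) : r <= s -> r%:A <=: s%:A.
Proof. by move=> h; apply/gsub; rewrite -scalerBl; apply: cst_ge0; rewrite subr_ge0. Qed.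
Lemma gZr (r s : R) a : r <= s -> 0 <=: a -> r *: a <=: s *: a.
Proof. by move=> h ha; apply/gsub; rewrite -scalerBl; apply: bale_scale; rewrite ?subr_ge0. Qed.
Lemma bnd a : exists k : R, 0 <= k /\ a <=: k%:A.
Proof.
have [n [hn h]] := ba_bounded L a.
by exists n%:R; split; rewrite ?ler0n //; rewrite scaler_nat.
Qed.
Lemma gM c a b : 0 <=: c -> a <=: b -> c * a <=: c * b.
Proof. by move=> hc /gsub h; apply/gsub; rewrite -mulrBr; apply: bale_mul. Qed.
Lemma gMr c a b : 0 <=: c -> a <=: b -> a * c <=: b * c.
Proof. by move=> hc h; rewrite ![_ * c]mulrC; apply: gM. Qed.

Lemma pp_ge0 a : 0 <=: pp a. Proof. exact: jr. Qed.
Lemma nn_ge0 a : 0 <=: nn a. Proof. exact: jr. Qed.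
Lemma le_pp a : a <=: pp a. Proof. exact: jl. Qed.
Lemma le_nn a : - a <=: nn a. Proof. exact: jl. Qed.
Lemma ppN a : pp (- a) = nn a. Proof. by []. Qed.
Lemma nnN a : nn (- a) = pp a. Proof. by rewrite /baNeg opprK. Qed.
Lemma pp_mono a b : a <=: b -> pp a <=: pp b.
Proof. by move=> h; apply: jmono => //; apply: gR. Qed.
Lemma nn_anti a b : a <=: b -> nn b <=: nn a.
Proof. by move=> h; apply: jmono; [apply: gN|apply: gR]. Qed.
Lemma pp_id a : 0 <=: a -> pp a = a.
Proof. by move=> h; rewrite /pp jC jE. Qed.
Lemma nn_0 a : 0 <=: a -> nn a = 0.
Proof. by move=> h; apply: jE; apply: gNl; rewrite oppr0. Qed.
Lemma pp_nn a : pp a - nn a = a.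
Proof.
have h := jmD a 0; rewrite addr0 in h.
have -> : nn a = - mt a 0 by rewrite oppM oppr0.
by rewrite opprK.
Qed.
Lemma pp_nn_m a : mt (pp a) (nn a) = 0.
Proof.
have -> : nn a = pp a - a by rewrite -[X in pp a - X](pp_nn a) opprB addrC subrK.
have -> : mt (pp a) (pp a - a) = mt 0 (- a) + pp a by rewrite mD add0r addrC.
have e : mt 0 (- a) = - jn a 0 by rewrite -[LHS]opprK oppM oppr0 opprK jC.
by rewrite e /pp addNr.
Qed.
Lemma ab_ge0 a : 0 <=: ab a.
Proof.
have h : a + - a <=: ab a + ab a by apply: gD; [apply: jl|apply: jr].
rewrite subrr -mulr2n -scaler_nat in h.
have h2 : (0 : R) < 2%:R by [].
have hi : (0 : R) <= 2%:R^-1 by rewrite invr_ge0 ltW.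
by have := gZ hi h; rewrite scaler0 scalerA mulVf ?lt0r_neq0 // scale1r.
Qed.
Lemma le_ab a : a <=: ab a. Proof. exact: jl. Qed.
Lemma le_abN a : - a <=: ab a. Proof. exact: jr. Qed.


Lemma ab_id a : 0 <=: a -> ab a = a.
Proof.
move=> h; rewrite /baAbs jC; apply: jE.
have h1 : - a <=: 0 by have := gN h; rewrite oppr0.
exact: gT h1 h.
Qed.
Lemma ab_ab a : ab (ab a) = ab a. Proof. exact/ab_id/ab_ge0. Qed.
Lemma ab_opp a : ab (- a) = ab a. Proof. by rewrite /baAbs opprK jC. Qed.
Lemma ab0 : ab 0 = 0. Proof. by apply: ab_id; apply: gR. Qed.
Lemma ab_add a b : ab (a + b) <=: ab a + ab b.
Proof. by apply: jlub; [apply: gD; apply: le_ab|rewrite opprD; apply: gD; apply: le_abN]. Qed.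
Lemma pp_le_ab a : pp a <=: ab a. Proof. by apply: jlub; [apply: le_ab|apply: ab_ge0]. Qed.
Lemma nn_le_ab a : nn a <=: ab a. Proof. by apply: jlub; [apply: le_abN|apply: ab_ge0]. Qed.
Lemma ab_le0 a : ab a <=: 0 -> a = 0.
Proof.
move=> h; apply: gA; first by apply: gT (le_ab a) h.
have h2 := gT (le_abN a) h.
by have := gN h2; rewrite oppr0 opprK.
Qed.
Lemma pp_add a b : pp (a + b) <=: pp a + pp b.
Proof.
apply: jlub; first by apply: gD; apply: le_pp.
by rewrite -(addr0 0); apply: gD; apply: pp_ge0.
Qed.
Lemma g0D a b : 0 <=: a -> 0 <=: b -> 0 <=: a + b.
Proof. by move=> h1 h2; rewrite -(addr0 0); apply: gD. Qed.
Lemma gle_addr a b : 0 <=: b -> a <=: a + b.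
Proof. by move=> h; rewrite -{1}(addr0 a); apply: gDl. Qed.
Lemma gle_addl a b : 0 <=: b -> a <=: b + a.
Proof. by move=> h; rewrite addrC; apply: gle_addr. Qed.

Lemma meet_mulZ (r : R) a b : 1 <= r -> 0 <=: a -> 0 <=: b -> mt (r *: a) b <=: r *: mt a b.
Proof.
move=> hr ha hb; have r0 : 0 < r by apply: lt_le_trans hr.
rewrite mZ //; apply: mmono; first by apply: gR.
by rewrite -{1}(scale1r b); apply: gZr.
Qed.

Lemma cy_le c y (k : R) : c <=: k%:A -> 0 <=: y -> c * y <=: k *: y.
Proof.
move=> hc hy; apply/gsub; rewrite -mulr_algl -mulrBl; apply: bale_mul => //.
exact/gsub.
Qed.
Lemma disj_mul c a b : 0 <=: c -> 0 <=: a -> 0 <=: b -> mt a b = 0 -> mt (c * a) b = 0.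
Proof.
move=> hc ha hb h.
have [k [k0 hk]] := bnd c.
have hk1 : c <=: (k + 1)%:A by apply: gT hk _; apply: cst_le; rewrite lerDl.
have hca := cy_le hk1 ha.
apply: gA; last by apply: mglb => //; apply: bale_mul.
apply: gT (mmono hca (gR b)) _.
rewrite -(scaler0 _ (k + 1)) -h; apply: meet_mulZ => //.
by rewrite lerDr.
Qed.
Lemma sq_ge0 a : 0 <=: a * a.
Proof.
set p := pp a; set q := nn a.
have h0 : mt p q = 0 by apply: pp_nn_m.
have h1 : mt (q * p) q = 0 by apply: disj_mul => //; [apply: nn_ge0|apply: pp_ge0|apply: nn_ge0].
have h2 : mt (p * q) (q * p) = 0.
  apply: disj_mul; [apply: pp_ge0|apply: nn_ge0|apply: bale_mul; [apply: nn_ge0|apply: pp_ge0]|].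
  by rewrite mC.
have pq : p * q = 0 by rewrite -h2 [q * p]mulrC mxx.
have -> : a * a = p * p + q * q.
  rewrite -(pp_nn a) -/p -/q mulrBl !mulrBr pq [q * p]mulrC pq; ring.
by apply: g0D; apply: bale_mul; rewrite ?pp_ge0 ?nn_ge0 //; first [apply: pp_ge0|apply: nn_ge0].
Qed.
Lemma idem_ge0 a : a * a = a -> 0 <=: a.
Proof. by move=> h; rewrite -h; apply: sq_ge0. Qed.
Lemma idem_ge0' a : a * a = a -> 0 <=: 1 - a.
Proof.
move=> h; apply: idem_ge0.
by rewrite mulrBl !mulrBr h mul1r mulr1; ring.
Qed.

Lemma ab_mul_le c a : exists k : R, 0 <= k /\ ab (c * a) <=: k *: ab a.
Proof.
have [k1 [k10 h1]] := bnd c.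
have [k2 [k20 h2]] := bnd (- c).
set k := k1 + k2.
have hc1 : c <=: k%:A by apply: gT h1 _; apply: cst_le; rewrite lerDl.
have hc2 : - c <=: k%:A by apply: gT h2 _; apply: cst_le; rewrite lerDr.
have k0 : 0 <= k by rewrite addr_ge0.
exists (k *+ 2); split; first by rewrite mulrn_wge0.
set p := pp a; set q := nn a.
have hp := cy_le hc1 (pp_ge0 a); have hq := cy_le hc1 (nn_ge0 a).
have hp' := cy_le hc2 (pp_ge0 a); have hq' := cy_le hc2 (nn_ge0 a).
have hpq : p + q <=: ab a + ab a by apply: gD; [apply: pp_le_ab|apply: nn_le_ab].
have hb : k *: (p + q) <=: (k *+ 2) *: ab a.
  by rewrite -mulr_natr -scalerA scaler_nat mulr2n; apply: gZ.
apply: gT hb; rewrite scalerDr; apply: jlub.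
  rewrite -(pp_nn a) -/p -/q mulrBr; apply: gD => //.
  by rewrite -mulNr.
rewrite -(pp_nn a) -/p -/q mulrBr opprB addrC; apply: gD => //.
by rewrite -mulNr.
Qed.
End Gen.
Section Ideals.
Variables (R : realType) (A : comAlgType R) (L : baL A).
Local Notation "x <=: y" := (bale L x y) (at level 70).
Local Notation jn := (bajoin L).
Local Notation mt := (bameet L).
Local Notation ab := (baAbs L).
Local Notation nn := (baNeg L).
Local Notation pp := (pp L).
Variable I : A -> Prop.
Hypothesis HI : isLIdeal L I.

Lemma I0 : I 0. Proof. by case: HI => [[]]. Qed.
Lemma IadD a b : I a -> I b -> I (a + b). Proof. by case: HI => [[_ [h _]]] _; apply: h. Qed.
Lemma Imul c a : I a -> I (c * a). Proof. by case: HI => [[_ [_ h]]] _; apply: h. Qed.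
Lemma Isol a b : ab a <=: ab b -> I b -> I a. Proof. by case: HI => _; apply. Qed.
Lemma Iopp a : I a -> I (- a). Proof. by move=> h; rewrite -mulN1r; apply: Imul. Qed.
Lemma Isub a b : I a -> I b -> I (a - b). Proof. by move=> h1 h2; apply: IadD => //; apply: Iopp. Qed.
Lemma Iab a : I a <-> I (ab a).
Proof. by split; apply: Isol; rewrite ab_ab; apply: gR. Qed.
Lemma Iab1 a : I a -> I (ab a). Proof. by move/Iab. Qed.
Lemma Ile a i : 0 <=: a -> a <=: i -> I i -> I a.
Proof.
move=> h0 h1; apply: Isol; rewrite ab_id //; apply: gT h1 _; apply: le_ab.
Qed.
Lemma Iabl a i : ab a <=: i -> I i -> I a.
Proof. by move=> h hi; apply/Iab; apply: Ile h hi; apply: ab_ge0. Qed.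
Lemma I1all : I 1 -> forall a, I a.
Proof. by move=> h a; rewrite -(mulr1 a); apply: Imul. Qed.
Lemma Icst (r : R) : 0 < r -> I r%:A -> I 1.
Proof.
move=> hr h; have := Imul (r^-1)%:A h.
by rewrite mulr_algl scalerA mulVf ?lt0r_neq0 // scale1r.
Qed.
Lemma Icst_le (r : R) z : 0 < r -> r%:A <=: z -> I z -> I 1.
Proof.
move=> hr h hz; apply: (@Icst r) => //; apply: Ile h hz.
by apply: cst_ge0; rewrite ltW.
Qed.
Lemma IZ (r : R) a : I a -> I (r *: a).
Proof. by move=> h; rewrite -mulr_algl; apply: Imul. Qed.
End Ideals.

Section Lists.
Variables (R : realType) (A : comAlgType R) (L : baL A).
Local Notation "x <=: y" := (bale L x y) (at level 70).
Local Notation jn := (bajoin L).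
Local Notation mt := (bameet L).

Lemma mL_le s0 ss a : a \in s0 :: ss -> foldr mt s0 ss <=: a.
Proof.
elim: ss => [|b ss IH] /=; first by rewrite inE => /eqP ->; apply: gR.
move=> h; have [->|hb] := eqVneq a b; first exact: ml.
apply: gT (mr L _ _) _; apply: IH; move: h; rewrite !inE (negbTE hb) //.
Qed.
Lemma mL_glb s0 ss c : (forall a, a \in s0 :: ss -> c <=: a) -> c <=: foldr mt s0 ss.
Proof.
elim: ss => [|b ss IH] /= h; first by apply: h; rewrite inE.
apply: mglb; first by apply: h; rewrite !inE eqxx orbT.
apply: IH => a ha; apply: h; move: ha; rewrite !inE => /orP [->|->] //; by rewrite !orbT.
Qed.
Lemma jL_ge t0 ts a : a \in t0 :: ts -> a <=: foldr jn t0 ts.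
Proof.
elim: ts => [|b ts IH] /=; first by rewrite inE => /eqP ->; apply: gR.
move=> h; have [->|hb] := eqVneq a b; first exact: jl.
apply: gT _ (jr L _ _); apply: IH; move: h; rewrite !inE (negbTE hb) //.
Qed.
Lemma jL_lub t0 ts c : (forall a, a \in t0 :: ts -> a <=: c) -> foldr jn t0 ts <=: c.
Proof.
elim: ts => [|b ts IH] /= h; first by apply: h; rewrite inE.
apply: jlub; first by apply: h; rewrite !inE eqxx orbT.
apply: IH => a ha; apply: h; move: ha; rewrite !inE => /orP [->|->] //; by rewrite !orbT.
Qed.
Lemma mL_sub s0 ss s1 ss1 : {subset s0 :: ss <= s1 :: ss1} -> foldr mt s1 ss1 <=: foldr mt s0 ss.
Proof. by move=> h; apply: mL_glb => a ha; apply: mL_le; apply: h. Qed.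
Lemma jL_sub s0 ss s1 ss1 : {subset s0 :: ss <= s1 :: ss1} -> foldr jn s0 ss <=: foldr jn s1 ss1.
Proof. by move=> h; apply: jL_lub => a ha; apply: jL_ge; apply: h. Qed.
End Lists.
Section K0sec.
Variables (R : realType) (A : comAlgType R) (L : baL A) (S T : A -> Prop).
Local Notation "x <=: y" := (bale L x y) (at level 70).
Local Notation jn := (bajoin L).
Local Notation mt := (bameet L).
Local Notation ab := (baAbs L).
Local Notation nn := (baNeg L).
Local Notation pp := (pp L).
Hypothesis Hn : forall s0 (ss : seq A) t0 (ts : seq A), S s0 -> (forall a, a \in ss -> S a) ->
  T t0 -> (forall a, a \in ts -> T a) -> ~ (foldr mt s0 ss <=: foldr jn t0 ts).

Definition wS s0 ss t0 ts := pp (foldr jn t0 ts - foldr mt s0 ss).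
Definition gdS (P : A -> Prop) s0 (ss : seq A) := P s0 /\ forall a, a \in ss -> P a.
Definition K0 z := z = 0 \/ exists s0 ss t0 ts, gdS S s0 ss /\ gdS T t0 ts /\
   exists r : R, 0 <= r /\ ab z <=: r *: wS s0 ss t0 ts.

Lemma wS_ge0 s0 ss t0 ts : 0 <=: wS s0 ss t0 ts. Proof. exact: pp_ge0. Qed.
Lemma wS_mono s0 ss t0 ts s1 ss1 t1 ts1 :
  {subset s0 :: ss <= s1 :: ss1} -> {subset t0 :: ts <= t1 :: ts1} ->
  wS s0 ss t0 ts <=: wS s1 ss1 t1 ts1.
Proof.
move=> h1 h2; apply: pp_mono; apply: gD; first exact: jL_sub.
by apply: gN; apply: mL_sub.
Qed.
Lemma sub_l (s0 : A) ss s1 ss1 : {subset s0 :: ss <= s0 :: (ss ++ s1 :: ss1)}.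
Proof. move=> a; rewrite !inE mem_cat => /orP [->|->] //; by rewrite !orbT. Qed.
Lemma sub_r (s0 : A) ss s1 ss1 : {subset s1 :: ss1 <= s0 :: (ss ++ s1 :: ss1)}.
Proof. by move=> a h; rewrite inE mem_cat h !orbT. Qed.
Lemma gd_cat P s0 ss s1 ss1 : gdS P s0 ss -> gdS P s1 ss1 -> gdS P s0 (ss ++ s1 :: ss1).
Proof.
move=> [h0 h] [h1 h']; split => // a; rewrite mem_cat inE => /orP [|/orP [/eqP ->|]] //.
  exact: h.
exact: h'.
Qed.

Lemma K0_ideal : isLIdeal L K0.
Proof.
split; last first.
  move=> a b hab [hb|[s0 [ss [t0 [ts [g1 [g2 [r [r0 hr]]]]]]]]].
    by left; rewrite hb ab0 in hab; exact: ab_le0 hab.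
  right; exists s0, ss, t0, ts; split; first exact: g1.
  split; first exact: g2.
  exists r; split => //; exact: gT hab hr.
split; first by left.
split.
  move=> a b [->|[s0 [ss [t0 [ts [g1 [g2 [r [r0 hr]]]]]]]]].
    by rewrite add0r.
  move=> [->|[s1 [ss1 [t1 [ts1 [g1' [g2' [r' [r0' hr']]]]]]]]].
    rewrite addr0; right; exists s0, ss, t0, ts; split; first exact: g1.
    by split; first exact: g2; exists r.
  right; exists s0, (ss ++ s1 :: ss1), t0, (ts ++ t1 :: ts1).
  split; first exact: gd_cat.
  split; first exact: gd_cat.
  exists (r + r'); split; first by rewrite addr_ge0.
  apply: gT (ab_add L a b) _; rewrite scalerDl; apply: gD.
    apply: gT hr _; apply: gZ => //; apply: wS_mono; [exact: sub_l|exact: sub_l].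
  apply: gT hr' _; apply: gZ => //; apply: wS_mono; [exact: sub_r|exact: sub_r].
move=> a c [->|[s0 [ss [t0 [ts [g1 [g2 [r [r0 hr]]]]]]]]].
  by left; rewrite mulr0.
right; exists s0, ss, t0, ts; split; first exact: g1.
split; first exact: g2.
have [k [k0 hk]] := ab_mul_le L c a.
exists (k * r); split; first by rewrite mulr_ge0.
apply: gT hk _; rewrite -scalerA; exact: gZ.
Qed.

Lemma K0_pp s t : S s -> T t -> K0 (pp (t - s)).
Proof.
move=> hs ht; right; exists s, [::], t, [::].
split; first by split => // a; rewrite in_nil.
split; first by split => // a; rewrite in_nil.
exists 1; split => //; rewrite scale1r ab_id; first exact: gR.
exact: pp_ge0.
Qed.

Lemma K0_1 : ~ K0 1.
Proof.
move=> [h|[s0 [ss [t0 [ts [[g1 g1'] [[g2 g2'] [r [r0 hr]]]]]]]]].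
  by move: (oner_neq0 A); rewrite h eqxx.
apply: (Hn g1 g1' g2 g2').
rewrite ab_id in hr; last exact: g01.
set m := foldr mt s0 ss in hr *; set J := foldr jn t0 ts in hr *.
set d := m - J.
have hw : wS s0 ss t0 ts = nn d by rewrite /wS /baNeg /d opprB.
rewrite hw in hr.
set p := pp d.
have r1 : 1 <= r + 1 by rewrite lerDr.
have h1 : 1 <=: (r + 1) *: nn d.
  apply: gT hr _; apply: gZr; [by rewrite lerDl|exact: nn_ge0].
have h2 : mt p 1 <=: 0.
  apply: gT (mmono (gR L p) h1) _; rewrite mC.
  apply: gT (meet_mulZ r1 (nn_ge0 L d) (pp_ge0 L d)) _.
  by rewrite mC pp_nn_m scaler0; apply: gR.
have [k [k0 hk]] := bnd L p.
have k1 : 1 <= k + 1 by rewrite lerDr.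
have hp : p <=: 0.
  have hpk : p <=: (k + 1) *: 1.
    apply: gT hk _; apply: cst_le; by rewrite lerDl.
  rewrite -(mE hpk) mC.
  apply: gT (meet_mulZ k1 (g01 L) (pp_ge0 L d)) _.
  rewrite -(scaler0 _ (k + 1)); apply: gZ; first by rewrite addr_ge0.
  by rewrite mC.
have hd : d <=: 0 := gT (le_pp L d) hp.
apply/gsub; have := gN hd; rewrite oppr0 /d opprB //.
Qed.
End K0sec.
Section Zsec.
Variables (R : realType) (A : comAlgType R) (L : baL A) (K : A -> Prop).
Hypothesis HK : isLIdeal L K.
Hypothesis HK1 : ~ K 1.

Definition Good (I : A -> Prop) := isLIdeal L I /\ (forall a, K a -> I a) /\ ~ I 1.

Lemma exists_max : exists M, isLIdeal L M /\ (forall a, K a -> M a) /\ ~ M 1 /\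
  (forall M', isLIdeal L M' -> (forall a, M a -> M' a) -> ~ M' 1 -> forall a, M' a -> M a).
Proof.
pose Ty := {I : A -> Prop | Good I}.
pose Rl := fun (I J : Ty) => `[< forall a, sval I a -> sval J a >].
have [] := @Zorn Ty Rl.
- by move=> t; apply/asboolP.
- move=> r s t /asboolP h1 /asboolP h2; apply/asboolP => a ha; exact/h2/h1.
- move=> [s hs] [t ht] /asboolP /= h1 /asboolP /= h2.
  have e : s = t by apply/funext => a; apply/propext; split; [apply: h1|apply: h2].
  subst t; congr exist; exact: Prop_irrelevance.
- move=> C Ctot.
  pose U := fun a => K a \/ exists I : Ty, C I /\ sval I a.
  have GU : Good U.
    split; last split.
    + split; last first.
        move=> a b hab [hb|[I [CI hb]]]; first by left; apply: (Isol HK hab hb).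
        by right; exists I; split => //; case: (svalP I) => HI _; apply: (Isol HI hab hb).
      split; first by left; apply: (I0 HK).
      split; last first.
        move=> a c [ha|[I [CI ha]]]; first by left; apply: (Imul HK _ ha).
        by right; exists I; split => //; case: (svalP I) => HI _; apply: (Imul HI _ ha).
      move=> a b [ha|[I [CI ha]]] [hb|[J [CJ hb]]].
      * by left; apply: (IadD HK ha hb).
      * right; exists J; split => //; case: (svalP J) => HJ [HKJ _].
        by apply: (IadD HJ _ hb); apply: HKJ.
      * right; exists I; split => //; case: (svalP I) => HI [HKI _].
        by apply: (IadD HI ha _); apply: HKI.
      * have [/asboolP h|/asboolP h] := Ctot I J CI CJ.
          right; exists J; split => //; case: (svalP J) => HJ _.
          by apply: (IadD HJ _ hb); apply: h.
        right; exists I; split => //; case: (svalP I) => HI _.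
        by apply: (IadD HI ha _); apply: h.
    + by move=> a ha; left.
    + move=> [h|[I [CI h]]]; first exact: HK1.
      by case: (svalP I) => _ [_ hI]; apply: hI.
  exists (exist _ U GU) => s Cs; apply/asboolP => a ha /=.
  by right; exists s.
move=> [M GM] Hmax; exists M; case: (GM) => HM [HKM HM1].
do 3 split => //.
move=> M' HM' hMM' hM'1 a ha.
have GM' : Good M'.
  by split => //; split => // b hb; apply: hMM'; apply: HKM.
have := Hmax (exist _ M' GM').
have h : Rl (exist _ M GM) (exist _ M' GM') by apply/asboolP.
move=> /(_ h) [] e; by rewrite e in ha.
Qed.
End Zsec.
Section Msec.
Variables (R : realType) (A : comAlgType R) (L : baL A) (M : A -> Prop).
Local Notation "x <=: y" := (bale L x y) (at level 70).
Local Notation jn := (bajoin L).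
Local Notation mt := (bameet L).
Local Notation ab := (baAbs L).
Local Notation nn := (baNeg L).
Local Notation pp := (pp L).
Hypothesis HM : isLIdeal L M.
Hypothesis HM1 : ~ M 1.
Hypothesis Hmax : forall M', isLIdeal L M' -> (forall a, M a -> M' a) -> ~ M' 1 ->
  forall a, M' a -> M a.

Lemma cstM (d : R) z : 0 < d -> d%:A <=: z -> M z -> False.
Proof. by move=> hd h hz; apply: HM1; apply: (Icst_le HM hd h hz). Qed.
Lemma M1le z : 1 <=: z -> M z -> False.
Proof. by move=> h hz; apply: HM1; apply: (Ile HM (g01 L) h hz). Qed.

Lemma genM x : ~ M x -> exists m (r : R), M m /\ 0 <=: m /\ 0 <= r /\ 1 <=: m + r *: ab x.
Proof.
move=> hx.
pose M' := fun z => exists m, M m /\ exists r : R, 0 <= r /\ ab z <=: ab m + r *: ab x.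
have HM' : isLIdeal L M'.
  split; last first.
    move=> a b hab [m [hm [r [r0 hr]]]]; exists m; split => //; exists r; split => //.
    exact: gT hab hr.
  split.
    exists 0; split; first exact: (I0 HM).
    by exists 0; split => //; rewrite scale0r addr0; apply: gR.
  split.
    move=> a b [m1 [hm1 [r1 [r10 h1]]]] [m2 [hm2 [r2 [r20 h2]]]].
    exists (ab m1 + ab m2); split.
      by apply: (IadD HM); apply: (Iab1 HM).
    exists (r1 + r2); split; first by rewrite addr_ge0.
    rewrite [ab (ab m1 + ab m2)]ab_id; last by apply: g0D; apply: ab_ge0.
    apply: gT (ab_add L a b) _.
    have -> : ab m1 + ab m2 + (r1 + r2) *: ab x = (ab m1 + r1 *: ab x) + (ab m2 + r2 *: ab x).
      by rewrite scalerDl; ring.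
    exact: gD.
  move=> a c [m [hm [r [r0 hr]]]].
  have [k [k0 hk]] := ab_mul_le L c a.
  exists (k *: ab m); split; first by apply: (IZ HM); apply: (Iab1 HM).
  exists (k * r); split; first by rewrite mulr_ge0.
  rewrite [ab (k *: ab m)]ab_id; last by apply: bale_scale => //; apply: ab_ge0.
  apply: gT hk _; rewrite -scalerA -scalerDr; exact: gZ.
have [h1|h1] := pselect (M' 1); last first.
  exfalso; apply: hx; apply: (Hmax HM' _ h1).
    move=> a ha; exists a; split => //; exists 0; split => //.
    by rewrite scale0r addr0; apply: gR.
  exists 0; split; first exact: (I0 HM).
  by exists 1; split => //; rewrite ab0 add0r scale1r; apply: gR.
case: h1 => m [hm [r [r0 hr]]].
exists (ab m), r; split; first by apply: (Iab1 HM).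
split; first exact: ab_ge0.
split => //.
by rewrite ab_id in hr; last exact: g01.
Qed.

Lemma primeM x y : 0 <=: x -> 0 <=: y -> M (mt x y) -> M x \/ M y.
Proof.
move=> hx hy hxy.
have [h|h] := pselect (M x); first by left.
have [h'|h'] := pselect (M y); first by right.
exfalso.
have [m1 [r1 [hm1 [m10 [r10 e1]]]]] := genM h.
have [m2 [r2 [hm2 [m20 [r20 e2]]]]] := genM h'.
rewrite ab_id // in e1; rewrite ab_id // in e2.
set rho := r1 + r2 + 1.
have rho0 : 0 < rho by rewrite /rho; lra.
have f1 : 1 <=: (m1 + m2) + rho *: x.
  apply: gT e1 _; apply: gD; first exact: gle_addr.
  by apply: gZr => //; rewrite /rho; lra.
have f2 : 1 <=: (m1 + m2) + rho *: y.
  apply: gT e2 _; apply: gD; first exact: gle_addl.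
  by apply: gZr => //; rewrite /rho; lra.
have f : 1 <=: rho *: mt x y + (m1 + m2).
  rewrite mZ // mD; apply: mglb; by rewrite addrC.
apply: (M1le f); apply: (IadD HM); first exact: (IZ HM).
exact: (IadD HM).
Qed.

Lemma archM : isArchIdeal L M.
Proof.
split => // a b hn.
suff hp : M (pp a) by exists (pp a); split => //; rewrite add0r; apply: le_pp.
have [//|h] := pselect (M (pp a)).
exfalso.
have [m [r [hm [m0 [r0 e]]]]] := genM h.
rewrite ab_id in e; last exact: pp_ge0.
have [k [k0 hk]] := bnd L b.
have kr0 : 0 <= (k + 1) * r by rewrite mulr_ge0 // addr_ge0.
set n := (Num.Def.archi_bound ((k + 1) * r)).+1.
have hn1 : (1 <= n)%N by [].
have hnr : (k + 1) * r <= n%:R.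
  apply: le_trans (ltW (archi_boundP kr0)) _.
  by rewrite ler_nat.
have [i [hi hai]] := hn n hn1.
have n0 : (0 : R) < n%:R by rewrite ltr0n.
have hpa : n%:R *: pp a <=: k%:A + ab i.
  have -> : n%:R *: pp a = pp (a *+ n).
    by rewrite -scaler_nat /pp jZ // scaler0.
  apply: gT (pp_mono hai) _; apply: gT (pp_add L b i) _.
  apply: gD; last exact: pp_le_ab.
  by apply: jlub => //; apply: cst_ge0.
have k10 : 0 <= k + 1 by rewrite addr_ge0.
have e2 := gZ k10 e.
rewrite scalerDr scalerA in e2.
have e3 : (k + 1) *: 1 <=: (k + 1) *: m + (k%:A + ab i).
  apply: gT e2 _; apply: gDl; apply: gT hpa.
  by apply: gZr => //; apply: pp_ge0.
have e4 : 1 <=: (k + 1) *: m + ab i.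
  have := gDr (- k%:A) e3.
  have -> : (k + 1) *: (1 : A) - k%:A = 1 by rewrite scalerDl scale1r; ring.
  by have -> : (k + 1) *: m + (k%:A + ab i) - k%:A = (k + 1) *: m + ab i by ring.
apply: (M1le e4); apply: (IadD HM); first exact: (IZ HM).
by apply: (Iab1 HM).
Qed.

Lemma arch_nn z : (forall d : R, 0 < d -> M (nn (z + d%:A))) -> M (nn z).
Proof.
move=> h.
have [_ ha] := archM.
have [i [hi hle]] : quotLe L M (nn z) 0.
  apply: (ha _ 1) => n hn.
  have n0 : (0 : R) < n%:R by rewrite ltr0n; case: n hn.
  set d := (n%:R : R)^-1.
  have d0 : 0 < d by rewrite invr_gt0.
  exists (n%:R *: nn (z + d%:A)); split; first by apply: (IZ HM); apply: h.
  have hy : nn z <=: d%:A + nn (z + d%:A).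
    apply: jlub.
      have -> : - z = d%:A + - (z + d%:A) by ring.
      exact/gDl/le_nn.
    by apply: g0D; [apply: cst_ge0; rewrite ltW|apply: nn_ge0].
  rewrite -scaler_nat; apply: gT (gZ (ltW n0) hy) _.
  rewrite scalerDr scalerA mulfV ?lt0r_neq0 // scale1r; exact: gR.
apply: (Ile HM (nn_ge0 L z)) hi.
by rewrite add0r in hle.
Qed.

Lemma tauM a : exists t : R, M (pp (a - t%:A)) /\ M (nn (a - t%:A)).
Proof.
pose E : set R := fun r => M (nn (a - r%:A)).
have [k [k0 hk]] := bnd L a.
have [k' [k0' hk']] := bnd L (- a).
have hE1 : E (- k').
  rewrite /E /= nn_0; first exact: (I0 HM).
  have -> : a - (- k')%:A = k'%:A - (- a) by rewrite scaleNr; ring.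
  exact/gsub.
have hub : forall r, E r -> r <= k.
  move=> r hr; rewrite leNgt; apply/negP => hkr.
  apply: (cstM (d := r - k)) hr; first by rewrite subr_gt0.
  apply: gT (le_nn L _); rewrite opprB scalerBl; apply: gDl; exact: gN.
have hs : has_sup E by split; [exists (- k')|exists k => r hr; apply: hub].
set t := sup E.
exists t; split.
  rewrite -nnN; apply: arch_nn => d d0.
  have hnE : ~ E (t + d).
    move=> hin; have := sup_upper_bound hs hin; rewrite -/t => ht.
    by move: (ltr_pwDr d0 (lexx t)); rewrite ltNge ht.
  have := primeM (pp_ge0 L (a - (t + d)%:A)) (nn_ge0 L (a - (t + d)%:A)).
  rewrite pp_nn_m => /(_ (I0 HM)) [hp|//].
  by rewrite -nnN in hp; have -> : - (a - t%:A) + d%:A = - (a - (t + d)%:A) by rewrite scalerDl; ring.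
apply: arch_nn => d d0.
have [e he hte] := sup_adherent d0 hs.
rewrite -/t in hte.
apply: (Ile HM (nn_ge0 L _) _ he).
apply: nn_anti.
have -> : a - t%:A + d%:A = a - (t - d)%:A by rewrite scalerBl; ring.
by apply: gDl; apply: gN; apply: cst_le; rewrite ltW.
Qed.

Lemma tau_le s t (ts tt : R) : M (pp (t - s)) -> M (pp (s - ts%:A)) -> M (nn (t - tt%:A)) -> tt <= ts.
Proof.
move=> h1 h2 h3; rewrite leNgt; apply/negP => hlt.
apply: (cstM (d := tt - ts)); first by rewrite subr_gt0.
  have -> : (tt - ts)%:A = (t - s) + (s - ts%:A) + (- (t - tt%:A)) by rewrite scalerBl; ring.
  apply: gD; last exact: le_nn.
  by apply: gD; apply: le_pp.
by apply: (IadD HM); first apply: (IadD HM).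
Qed.
End Msec.
Lemma bmeet (a b : bool) : Order.meet a b = a && b. Proof. by []. Qed.
Lemma bjoin (a b : bool) : Order.join a b = a || b. Proof. by []. Qed.
Lemma bbot : (Order.bottom : bool) = false. Proof. by []. Qed.
Lemma btop : (Order.top : bool) = true. Proof. by []. Qed.

Section Final.
Variables (R : realType) (A : comAlgType R) (LA : baL A)
  (d : Order.disp_t) (B : ctbDistrLatticeType d) (e : (A -> Prop) -> B)
  (He : isFreeBoolExt LA e)
  (P : comAlgType R) (LP : baL P) (x : B -> P) (Hx : isRB x)
  (D : comAlgType R) (LD : baL D) (j : P -> D) (Hj : isDedekindCompletion LP LD j).
Variable (M : A -> Prop).
Hypothesis HM : isLIdeal LA M.
Hypothesis HM1 : ~ M 1.
Hypothesis Hmax : forall M', isLIdeal LA M' -> (forall a, M a -> M' a) -> ~ M' 1 ->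
  forall a, M' a -> M a.

Local Notation "a <=: b" := (bale LA a b) (at level 70).
Local Notation "a <=D b" := (bale LD a b) (at level 70).

Let HMa := archM HM HM1 Hmax.

Lemma aJ_ideal I J : isLIdeal LA (archJoin LA I J).
Proof.
split; last first.
  by move=> a b hab hb K HK hI hJ; apply: (Isol (proj1 HK) hab); apply: hb.
split; first by move=> K HK _ _; apply: (I0 (proj1 HK)).
split.
  by move=> a b ha hb K HK hI hJ; apply: (IadD (proj1 HK)); [apply: ha|apply: hb].
by move=> a c ha K HK hI hJ; apply: (Imul (proj1 HK)); apply: ha.
Qed.
Lemma aJ_l I J a : I a -> archJoin LA I J a. Proof. by move=> h K _ hI _; apply: hI. Qed.
Lemma aJ_r I J a : J a -> archJoin LA I J a. Proof. by move=> h K _ _ hJ; apply: hJ. Qed.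

Lemma aJ_M J : (forall a, J a -> M a) -> archJoin LA M J = M.
Proof.
move=> h; apply/funext => a; apply/propext; split; last exact: aJ_l.
by move=> ha; apply: ha => //.
Qed.
Lemma aJ_top J : ~ (forall a, J a -> M a) -> archJoin LA M J = @archTop _ A.
Proof.
move=> h.
have h1 : archJoin LA M J 1.
  have [//|hn] := pselect (archJoin LA M J 1).
  exfalso; apply: h => a ha.
  apply: (Hmax (aJ_ideal M J) _ hn); first by move=> b hb; apply: aJ_l.
  exact: aJ_r.
apply/funext => a; apply/propext; split => // _.
exact: (I1all (aJ_ideal M J) h1).
Qed.

Definition fM (K : A -> Prop) : bool := ~~ `[< forall a, K a -> M a >].

Lemma fM_hom : archLatHom LA fM.
Proof.
split.
  by rewrite /fM asboolT // => a ->; apply: (I0 HM).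
split.
  by rewrite /fM asboolF // => h; apply: HM1; apply: h.
move=> I J HI HJ; split.
  rewrite /fM /= bmeet.
  have [hI|hI] := pselect (forall a, I a -> M a).
    rewrite (asboolT hI) asboolT //= => a [ha _]; exact: hI.
  have [hJ|hJ] := pselect (forall a, J a -> M a).
    rewrite (asboolT hJ) asboolT ?andbF //= => a [_ ha]; exact: hJ.
  rewrite (asboolF hI) (asboolF hJ) asboolF //.
  move=> hIJ.
  have [k hk] : exists k, I k /\ ~ M k.
    by apply: contrapT => hn; apply: hI => a ha; apply: contrapT => hm; apply: hn; exists a.
  have [l hl] : exists l, J l /\ ~ M l.
    by apply: contrapT => hn; apply: hJ => a ha; apply: contrapT => hm; apply: hn; exists a.
  case: hk => hk hk'; case: hl => hl hl'.
  have hm : M (bameet LA (baAbs LA k) (baAbs LA l)).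
    apply: hIJ; split.
      apply: (Ile (proj1 HI) _ (ml _ _ _) (Iab1 (proj1 HI) hk)).
      by apply: mglb; apply: ab_ge0.
    apply: (Ile (proj1 HJ) _ (mr _ _ _) (Iab1 (proj1 HJ) hl)).
    by apply: mglb; apply: ab_ge0.
  have [] := primeM HM HM1 Hmax (ab_ge0 LA k) (ab_ge0 LA l) hm.
    by move=> h; apply: hk'; exact: (proj2 (Iab HM k) h).
  by move=> h; apply: hl'; exact: (proj2 (Iab HM l) h).
rewrite /fM /= bjoin.
have [hI|hI] := pselect (forall a, I a -> M a).
  have [hJ|hJ] := pselect (forall a, J a -> M a).
    rewrite (asboolT hI) (asboolT hJ) asboolT // => a ha.
    exact: (ha M HMa hI hJ).
  rewrite (asboolF hJ) orbT asboolF // => h; apply: hJ => a ha; apply: h; exact: aJ_r.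
rewrite (asboolF hI) /= asboolF // => h; apply: hI => a ha; apply: h; exact: aJ_l.
Qed.

Lemma final_contra (S T : A -> Prop) (eps : R) u v :
  0 < eps -> (forall s t, S s -> T t -> M (pp LA (t - s))) ->
  isInf LD (alphaImage LA e x LD j S) u -> isSup LD (alphaImage LA e x LD j T) v ->
  u + eps%:A <=D v -> False.
Proof.
move=> heps hST hinf hsup huv.
have [Heh Heu] := He.
have [ebot [etop ejm]] := Heh.
have [g [[gb [gt [gm gj]]] hg]] := (Heu _ _ fM fM_hom).1.
have gc : forall b, g (Order.compl b) = ~~ g b.
  move=> b; have h1 := gm (Order.compl b) b; have h2 := gj (Order.compl b) b.
  rewrite Order.CTBDistrLatticeTheory.meetCx gb bmeet in h1; rewrite Order.CTBDistrLatticeTheory.joinCx gt bjoin in h2.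
  by move: h1 h2; case: (g b); case: (g (Order.compl b)).
pose y := fun b => ((g b)%:R : R^o).
have hy : rbRel y.
  split; [|split; [|split]].
  - by move=> a b; rewrite /y gm bmeet; case: (g a); case: (g b); rewrite /= ?mulr1n ?mulr0n ?mulr1 ?mulr0.
  - by move=> a b; rewrite /y gj bjoin; case: (g a); case: (g b); rewrite /= ?mulr1n ?mulr0n ?mulr1 ?mulr0 ?subr0 ?addr0 ?add0r ?addrK.
  - by move=> a; rewrite /y gc; case: (g a); rewrite /= ?mulr1n ?mulr0n ?subrr ?subr0.
  - by rewrite /y gb.
have [xm [xj [xc xb]]] := Hx.1.
have [[h [[hadd [hmul [h1 hsc]]] hxy]] _] := Hx.2 _ y hy.
have [Hdc [[jadd [jmul [j1 jsc]]] [jinj _]]] := Hj.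
set a0 := Order.compl (e M).
have hxa : h (x a0) = 1.
  rewrite hxy /y /a0 gc hg //= /fM asboolT //.
have h0 : h 0 = 0 by apply: (addrI (h 0)); rewrite -hadd !addr0.
have j0 : j 0 = 0 by apply: (addrI (j 0)); rewrite -jadd !addr0.
set E := j (x a0).
have Ene0 : E <> 0.
  move=> hE; have : x a0 = 0 by apply: jinj; rewrite -/E hE j0.
  move=> hx0; move: hxa; rewrite hx0 h0 => /eqP; by rewrite eq_sym oner_eq0.
have EE : E * E = E by rewrite /E -jmul -xm meetxx.
have E0 : 0 <=D E := idem_ge0 LD EE.
have E1 : 0 <=D 1 - E := idem_ge0' LD EE.
have Edecomp : forall z, z = E * z + (1 - E) * z by move=> z; ring.
have Eproj : forall a b, E * (E * a + (1 - E) * b) = E * a.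
  by move=> a b; rewrite mulrDr mulrA EE mulrA mulrBr mulr1 EE subrr mul0r addr0.
have Eproj2 : forall (r : R) b, E * (r *: E + (1 - E) * b) = r *: E.
  by move=> r b; rewrite mulrDr -scalerAr EE mulrA mulrBr mulr1 EE subrr mul0r addr0.
have Emul_le : forall a b, a <=D b -> E * a <=D E * b by move=> a b; apply: gM.
have EJ1 : forall J, isArchIdeal LA J -> (forall a, J a -> M a) -> E * j (x (Order.compl (e J))) = E.
  move=> J HJ hJ; rewrite /E -jmul -xm -Order.CTBDistrLatticeTheory.complU.
  by rewrite -(proj2 (ejm _ _ HMa HJ)) aJ_M.
have EJ0 : forall J, isArchIdeal LA J -> ~ (forall a, J a -> M a) -> E * j (x (Order.compl (e J))) = 0.
  move=> J HJ hJ; rewrite /E -jmul -xm -Order.CTBDistrLatticeTheory.complU.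
  by rewrite -(proj2 (ejm _ _ HMa HJ)) aJ_top // etop Order.CTBDistrLatticeTheory.compl1 xb j0.
have alpha_T : forall t z (tau : R), M (pp LA (t - tau%:A)) -> isAlpha LA e x LD j t z ->
    E * z <=D tau *: E.
  move=> t z tau ht [sg [hsg [hub hlub]]].
  have key : z + sg%:A <=D (tau + sg) *: E + (1 - E) * (z + sg%:A).
    apply: hlub => y0 [r [J [HJ [hJ ->]]]].
    rewrite {1}(Edecomp (r *: j (x (Order.compl (e J))))); apply: gD; last first.
      by apply: gM E1 _; apply: hub; exists r, J.
    rewrite -scalerAr.
    have [hJM|hJM] := pselect (forall a, J a -> M a).
      rewrite EJ1 //; apply: gZr => //.
      rewrite leNgt; apply/negP => hlt.
      apply: (cstM HM HM1 (d := r - (tau + sg))); first by rewrite subr_gt0.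
        have -> : (r - (tau + sg))%:A = - (t + sg%:A - r%:A) + (t - tau%:A).
          by rewrite !scalerBl scalerDl; ring.
        by apply: gD; [apply: le_nn|apply: le_pp].
      by apply: (IadD HM) ht; apply: hJM.
    rewrite EJ0 // scaler0; apply: bale_scale => //.
    rewrite leNgt; apply/negP => hlt.
    apply: (cstM HM HM1 (d := - (tau + sg))); first by rewrite oppr_gt0.
      have e' : (- (tau + sg))%:A <=: t - tau%:A.
        have -> : t - tau%:A = (t + sg%:A) + (- (tau + sg))%:A by rewrite scaleNr scalerDl; ring.
        exact: gle_addl hsg.
      exact: gT e' (le_pp LA _).
    exact: ht.
  have k2 := Emul_le _ _ key; rewrite Eproj2 mulrDr mulr_algr in k2.
  by have := gDr (- (sg *: E)) k2; rewrite scalerDl !addrK.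
have alpha_S : forall s z (tau : R), M (baNeg LA (s - tau%:A)) -> isAlpha LA e x LD j s z ->
    tau *: E <=D E * z.
  move=> s z tau hs [sg [hsg [hub hlub]]].
  have hin : alphaSet LA e x j s sg ((tau + sg) *: E).
    exists (tau + sg), M; split => //; split => //.
    by have -> : s + sg%:A - (tau + sg)%:A = s - tau%:A by rewrite scalerDl; ring.
  have k := Emul_le _ _ (hub _ hin); rewrite -scalerAr EE mulrDr mulr_algr in k.
  by have := gDr (- (sg *: E)) k; rewrite scalerDl !addrK.
have hv : forall s zs, S s -> isAlpha LA e x LD j s zs -> E * v <=D E * zs.
  move=> s zs hs hzs.
  have [ts [hps hns]] := tauM HM HM1 Hmax s.
  have key : v <=D ts *: E + (1 - E) * v.
    apply: (proj2 hsup) => zt [t [ht hzt]].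
    have [tt [hpt hnt]] := tauM HM HM1 Hmax t.
    have hle : tt <= ts := tau_le HM HM1 (hST s t hs ht) hps hnt.
    rewrite (Edecomp zt); apply: gD.
      by apply: gT (alpha_T _ _ _ hpt hzt) _; apply: gZr.
    by apply: gM E1 _; apply: (proj1 hsup); exists t.
  have k := Emul_le _ _ key; rewrite Eproj2 in k.
  by apply: gT k _; apply: alpha_S hns hzs.
have hu : E * v + (1 - E) * u <=D u.
  apply: (proj2 hinf) => zs [s [hs hzs]].
  rewrite (Edecomp zs); apply: gD; first exact: hv hs hzs.
  by apply: gM E1 _; apply: (proj1 hinf); exists s.
have k1 := Emul_le _ _ hu; rewrite Eproj in k1.
have k2 := Emul_le _ _ huv; rewrite mulrDr mulr_algr in k2.
have k3 := gT k2 k1.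
have k4 := gDr (- (E * u)) k3; rewrite addrAC !subrr add0r in k4.
have ie : 0 <= eps^-1 by rewrite invr_ge0 ltW.
have k5 := gZ ie k4; rewrite scalerA mulVf ?lt0r_neq0 // scale1r scaler0 in k5.
exact: Ene0 (gA k5 E0).
Qed.
End Final.

Theorem mainTheorem9 (R : realType) (A : comAlgType R) (LA : baL A)
  (d : Order.disp_t) (B : ctbDistrLatticeType d) (e : (A -> Prop) -> B)
  (He : isFreeBoolExt LA e)
  (P : comAlgType R) (LP : baL P) (x : B -> P) (Hx : isRB x)
  (D : comAlgType R) (LD : baL D) (j : P -> D) (Hj : isDedekindCompletion LP LD j)
  (S T : A -> Prop) (eps : R) :
  0 < eps ->
  (exists u v : D,
     isInf LD (alphaImage LA e x LD j S) u /\
     isSup LD (alphaImage LA e x LD j T) v /\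
     bale LD (u + eps%:A) v) ->
  exists (s0 : A) (ss : seq A) (t0 : A) (ts : seq A),
    S s0 /\ (forall a, a \in ss -> S a) /\
    T t0 /\ (forall a, a \in ts -> T a) /\
    bale LA (foldr (bameet LA) s0 ss) (foldr (bajoin LA) t0 ts).
Proof.
move=> heps [u [v [hinf [hsup huv]]]].
apply: contrapT => Hneg.
have Hn : forall s0 (ss : seq A) t0 (ts : seq A), S s0 -> (forall a, a \in ss -> S a) ->
    T t0 -> (forall a, a \in ts -> T a) ->
    ~ bale LA (foldr (bameet LA) s0 ss) (foldr (bajoin LA) t0 ts).
  move=> s0 ss t0 ts h1 h2 h3 h4 hle; apply: Hneg.
  by exists s0, ss, t0, ts.
have [M [HM [HKM [HM1 Hmax]]]] := exists_max (K0_ideal LA S T) (K0_1 Hn).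
apply: (final_contra He Hx Hj HM HM1 Hmax heps _ hinf hsup huv).
by move=> s t hs ht; apply: HKM; apply: K0_pp.
Qed.
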